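(* Let $A$ be a non-zero evolution algebra. Then (i) $A$ is semisimple if and only if $A$ is a non-zero trivial evolution algebra; (ii) $A/\mathrm{Rad}(A)$ is either $\{0\}$ or a non-zero trivial evolution algebra.
   Context: An evolution algebra is an algebra $A$ over $\mathbb{K}\in\{\mathbb{R},\mathbb{C}\}$ with a basis $\{e_i:i\in\Lambda\}$ (natural basis) with $e_ie_j=0$ for $i\neq j$. A non-zero trivial evolution algebra is one having a natural basis with $e_i^2=\omega_{ii}e_i$, $\omega_{ii}\neq0$, for all $i$. An ideal $M$ is modular if some $u\in A$ satisfies $a-au\in M$ for all $a\in A$; $\mathrm{Rad}(A)$ is the intersection of all maximal modular ideals of $A$ (equal to $A$ if there are none), and $A$ is semisimple if $\mathrm{Rad}(A)=\{0\}$. $A/\mathrm{Rad}(A)$ carries the quotient product. *)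

(* Defs.v *)
From HB Require Import structures.
From mathcomp Require Import all_boot all_order all_algebra.
Set Implicit Arguments. Unset Strict Implicit. Unset Printing Implicit Defensive.
Import Order.TTheory GRing.Theory Num.Theory.
Local Open Scope ring_scope.

Section EvolutionAlgebras.
Variables (K : numFieldType) (A : lmodType K) (mul : A -> A -> A).

Definition bilinear_prod : Prop :=
  (forall a b c, mul (a + b) c = mul a c + mul b c) /\
  (forall (k : K) a c, mul (k *: a) c = k *: mul a c) /\
  (forall a b c, mul c (a + b) = mul c a + mul c b) /\
  (forall (k : K) a c, mul c (k *: a) = k *: mul c a).

(* Notions "modulo" a subset M of A: these describe the quotient A/M (with the
   quotient product) through representatives; M = {0} gives the notions on A. *)
Definition zero_set : A -> Prop := fun a => a = 0.

Definition basis_mod (M : A -> Prop) (I : Type) (e : I -> A) : Prop :=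
  (forall a : A, exists (n : nat) (f : 'I_n -> I) (c : 'I_n -> K),
      M (a - \sum_(k < n) c k *: e (f k))) /\
  (forall (n : nat) (f : 'I_n -> I) (c : 'I_n -> K), injective f ->
      M (\sum_(k < n) c k *: e (f k)) -> forall k, c k = 0).

Definition natural_basis_mod (M : A -> Prop) (I : Type) (e : I -> A) : Prop :=
  basis_mod M e /\ forall i j, i <> j -> M (mul (e i) (e j)).

Definition evolution_algebra_mod (M : A -> Prop) : Prop :=
  exists (I : Type) (e : I -> A), natural_basis_mod M e.

Definition nonzero_trivial_evolution_mod (M : A -> Prop) : Prop :=
  (exists a : A, ~ M a) /\
  exists (I : Type) (e : I -> A) (w : I -> K),
    natural_basis_mod M e /\
    forall i, w i <> 0 /\ M (mul (e i) (e i) - w i *: e i).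

Definition evolution_algebra : Prop := evolution_algebra_mod zero_set.
Definition nonzero_trivial_evolution : Prop :=
  nonzero_trivial_evolution_mod zero_set.

Definition is_ideal (M : A -> Prop) : Prop :=
  M 0 /\ (forall a b, M a -> M b -> M (a + b)) /\
  (forall (k : K) a, M a -> M (k *: a)) /\
  (forall a x, M a -> M (mul x a) /\ M (mul a x)).

Definition maximal_ideal (M : A -> Prop) : Prop :=
  is_ideal M /\ (exists a, ~ M a) /\
  forall N : A -> Prop, is_ideal N -> (forall a, M a -> N a) ->
    (forall a, N a <-> M a) \/ (forall a, N a).

Definition modular (M : A -> Prop) : Prop :=
  exists u : A, forall a : A, M (a - mul a u).

Definition maximal_modular_ideal (M : A -> Prop) : Prop :=
  maximal_ideal M /\ modular M.

(* Rad(A): intersection of all maximal modular ideals (= A if there are none) *)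
Definition Rad : A -> Prop :=
  fun a => forall M : A -> Prop, maximal_modular_ideal M -> M a.

Definition semisimple : Prop := forall a, Rad a -> a = 0.

End EvolutionAlgebras.

(* Main.v *)
Require Import Defs.
From HB Require Import structures.
From mathcomp Require Import all_boot all_order all_algebra.
From mathcomp Require Import ring.
From Stdlib Require Import ClassicalEpsilon Classical.
Set Implicit Arguments. Unset Strict Implicit. Unset Printing Implicit Defensive.
Import GRing.Theory Num.Theory.
Local Open Scope ring_scope.

Definition pb (P : Prop) : bool :=
  if excluded_middle_informative P then true else false.
Lemma pbP (P : Prop) : reflect P (pb P).
Proof. rewrite /pb; case: excluded_middle_informative => h; by constructor. Qed.

Definition cT (T : Type) : Type := T.
Definition ceq (T : Type) (x y : cT T) : bool := pb (x = y).
Lemma ceqP (T : Type) : Equality.axiom (@ceq T).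
Proof. move=> x y; exact: pbP. Qed.
HB.instance Definition _ (T : Type) := hasDecEq.Build (cT T) (@ceqP T).

Lemma big_pred1_seq (R : zmodType) (T : eqType) (r : seq T) (i : T) (F : T -> R) :
  uniq r -> \sum_(j <- r | j == i) F j = if i \in r then F i else 0.
Proof.
move=> ur; case: ifP => hi.
  by rewrite -big_filter (@eq_filter _ _ (pred1 i)) ?filter_pred1_uniq ?big_seq1.
by apply: big1_seq => j /andP[/eqP -> ]; rewrite hi.
Qed.

Section Coords.
Variables (K : numFieldType) (A : lmodType K) (mul : A -> A -> A).
Hypothesis Hbil : bilinear_prod mul.
Variables (I0 : Type) (e : I0 -> A).
Hypothesis Hb : natural_basis_mod mul (@zero_set K A) e.
Local Notation J := (cT I0).

Definition val_r (r : seq (J * K)) : A := \sum_(p <- r) p.2 *: e p.1.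
Definition co (r : seq (J * K)) (i : J) : K := \sum_(p <- r | p.1 == i) p.2.

Lemma rep_ex a : exists r, val_r r = a.
Proof.
case: Hb => [[Hsp _] _]; have [n [f [c H]]] := Hsp a.
exists [seq (f k, c k) | k <- enum 'I_n].
rewrite /val_r big_map big_enum /=; symmetry; apply: subr0_eq; exact: H.
Qed.

Lemma partition r : val_r r = \sum_(i <- undup (map fst r)) co r i *: e i.
Proof.
rewrite /co.
under eq_bigr => i _ do rewrite scaler_suml big_mkcond.
rewrite exchange_big /val_r; apply: eq_big_seq => p hp.
rewrite -big_mkcond /=.
rewrite (eq_big (fun j => j == p.1) (fun _ => p.2 *: e p.1)); last first.
- by move=> j /eqP ->.
- by move=> j; rewrite eq_sym.
rewrite big_pred1_seq ?undup_uniq // mem_undup map_f //.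
Qed.

Lemma indep r : val_r r = 0 -> forall i, co r i = 0.
Proof.
move=> h0 i; set s := undup (map fst r).
have us : uniq s by exact: undup_uniq.
have hs : \sum_(j <- s) co r j *: e j = 0 by rewrite -partition.
case: (boolP (i \in s)) => his; last first.
  rewrite /co big1_seq // => p /andP[/eqP hpi hp]; exfalso.
  by move/negP: his; apply; rewrite mem_undup -hpi map_f.
case: Hb => [[_ Hind] _].
move: hs; rewrite (big_nth i) big_mkord => hs.
have hk : (index i s < size s)%N by rewrite index_mem.
have inj : injective (fun k : 'I_(size s) => nth i s k).
  move=> k1 k2 /eqP; rewrite nth_uniq // => /eqP; exact: val_inj.
have := Hind _ _ (fun k => co r (nth i s k)) inj hs (Ordinal hk).
by rewrite /= nth_index.
Qed.

Definition rep (a : A) : seq (J * K) :=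
  proj1_sig (constructive_indefinite_description _ (rep_ex a)).
Lemma repP a : val_r (rep a) = a.
Proof. by rewrite /rep; case: constructive_indefinite_description. Qed.

Definition coord (i : J) (a : A) : K := co (rep a) i.

Lemma val_cat r1 r2 : val_r (r1 ++ r2) = val_r r1 + val_r r2.
Proof. by rewrite /val_r big_cat. Qed.
Lemma co_cat r1 r2 i : co (r1 ++ r2) i = co r1 i + co r2 i.
Proof. by rewrite /co big_cat. Qed.
Definition scr (k : K) (r : seq (J * K)) := [seq (p.1, k * p.2) | p <- r].
Lemma val_scr k r : val_r (scr k r) = k *: val_r r.
Proof. by rewrite /val_r big_map scaler_sumr; apply: eq_bigr => p _; rewrite scalerA. Qed.
Lemma co_scr k r i : co (scr k r) i = k * co r i.
Proof. by rewrite /co big_map mulr_sumr. Qed.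

Lemma coordE r i : coord i (val_r r) = co r i.
Proof.
have h : val_r (rep (val_r r) ++ scr (-1) r) = 0.
  by rewrite val_cat val_scr repP scaleN1r subrr.
have := indep h i; rewrite co_cat co_scr mulN1r => /eqP.
by rewrite subr_eq0 => /eqP.
Qed.

Lemma coordD i a b : coord i (a + b) = coord i a + coord i b.
Proof. by rewrite -{1}(repP a) -{1}(repP b) -val_cat coordE co_cat. Qed.
Lemma coordZ i k a : coord i (k *: a) = k * coord i a.
Proof. by rewrite -{1}(repP a) -val_scr coordE co_scr. Qed.
Lemma coord0 i : coord i 0 = 0.
Proof. by rewrite -(scale0r 0) coordZ mul0r. Qed.
Lemma coordN i a : coord i (- a) = - coord i a.
Proof. by rewrite -scaleN1r coordZ mulN1r. Qed.
Lemma coordB i a b : coord i (a - b) = coord i a - coord i b.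
Proof. by rewrite coordD coordN. Qed.
Lemma coord_sum i (T : Type) (s : seq T) (P : pred T) (F : T -> A) :
  coord i (\sum_(x <- s | P x) F x) = \sum_(x <- s | P x) coord i (F x).
Proof. exact: (big_morph (coord i) (coordD i) (coord0 i)). Qed.
Lemma coord_e i (j : J) : coord i (e j) = (j == i)%:R.
Proof.
have -> : e j = val_r [:: (j, 1)] by rewrite /val_r big_seq1 scale1r.
by rewrite coordE /co big_cons big_nil /=; case: eqP => _; rewrite ?addr0.
Qed.

Definition supp a : seq J := undup (map fst (rep a)).
Lemma supp_uniq a : uniq (supp a). Proof. exact: undup_uniq. Qed.
Lemma expand a : a = \sum_(i <- supp a) coord i a *: e i.
Proof. by rewrite -{1}(repP a) partition. Qed.
Lemma coord_supp a j : j \notin supp a -> coord j a = 0.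
Proof.
move=> hj; rewrite /coord /co big1_seq // => p /andP[/eqP hpi hp]; exfalso.
by move/negP: hj; apply; rewrite mem_undup -hpi map_f.
Qed.

Lemma coord_comb i (s : seq J) (P : pred J) (c : J -> K) : uniq s ->
  coord i (\sum_(j <- s | P j) c j *: e j) = if (i \in s) && P i then c i else 0.
Proof.
move=> us; rewrite coord_sum.
under eq_bigr => j _ do rewrite coordZ coord_e.
rewrite big_mkcond /=.
rewrite (eq_bigr (fun j => if j == i then (if P i then c i else 0) else 0)); last first.
  by move=> j _; case: eqP => [->|_]; case: (P _); rewrite ?mulr1 ?mulr0.
rewrite -big_mkcond big_pred1_seq //; by case: (i \in s).
Qed.

Lemma coord_zero a : (forall i, coord i a = 0) -> a = 0.
Proof. by move=> h; rewrite (expand a) big1 // => i _; rewrite h scale0r. Qed.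
Lemma eq_coord a b : (forall i, coord i a = coord i b) -> a = b.
Proof. by move=> h; apply: subr0_eq; apply: coord_zero => i; rewrite coordB h subrr. Qed.

Lemma mDl a b c : mul (a + b) c = mul a c + mul b c. Proof. by case: Hbil. Qed.
Lemma mZl (k : K) a c : mul (k *: a) c = k *: mul a c. Proof. by case: Hbil => _ []. Qed.
Lemma mDr a b c : mul c (a + b) = mul c a + mul c b. Proof. by case: Hbil => _ [_ []]. Qed.
Lemma mZr (k : K) a c : mul c (k *: a) = k *: mul c a. Proof. by case: Hbil => _ [_ [_]]. Qed.
Lemma m0l y : mul 0 y = 0. Proof. by have := mZl 0 0 y; rewrite !scale0r. Qed.
Lemma m0r y : mul y 0 = 0. Proof. by have := mZr 0 0 y; rewrite !scale0r. Qed.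
Lemma mNr a c : mul c (- a) = - mul c a.
Proof. by rewrite -scaleN1r mZr scaleN1r. Qed.
Lemma mBl a b c : mul (a - b) c = mul a c - mul b c.
Proof. by rewrite mDl -scaleN1r mZl scaleN1r. Qed.
Lemma mul_suml (T : Type) (s : seq T) (P : pred T) (F : T -> A) y :
  mul (\sum_(x <- s | P x) F x) y = \sum_(x <- s | P x) mul (F x) y.
Proof. exact: (big_morph (fun x => mul x y) (fun a b => mDl a b y) (m0l y)). Qed.
Lemma mul_sumr (T : Type) (s : seq T) (P : pred T) (F : T -> A) y :
  mul y (\sum_(x <- s | P x) F x) = \sum_(x <- s | P x) mul y (F x).
Proof. exact: (big_morph (fun x => mul y x) (fun a b => mDr a b y) (m0r y)). Qed.
Lemma mul_ee (i j : J) : i != j -> mul (e i) (e j) = 0.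
Proof. by move=> /eqP hij; case: Hb => _ h; exact: h. Qed.

Lemma mul_e_r (k : J) y : mul (e k) y = coord k y *: mul (e k) (e k).
Proof.
rewrite {1}(expand y) mul_sumr.
rewrite (eq_bigr (fun l => if l == k then coord k y *: mul (e k) (e k) else 0)); last first.
  move=> l _; rewrite mZr; case: eqP => [-> //|/eqP hl].
  by rewrite mul_ee ?scaler0 // eq_sym.
rewrite -big_mkcond big_pred1_seq ?supp_uniq //.
by case: ifP => // /negbT /coord_supp ->; rewrite scale0r.
Qed.

Lemma mul_e_l (k : J) y : mul y (e k) = coord k y *: mul (e k) (e k).
Proof.
rewrite {1}(expand y) mul_suml.
rewrite (eq_bigr (fun l => if l == k then coord k y *: mul (e k) (e k) else 0)); last first.
  move=> l _; rewrite mZl; case: eqP => [-> //|/eqP hl].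
  by rewrite mul_ee ?scaler0.
rewrite -big_mkcond big_pred1_seq ?supp_uniq //.
by case: ifP => // /negbT /coord_supp ->; rewrite scale0r.
Qed.

Lemma mul_formula x y :
  mul x y = \sum_(k <- supp x) (coord k x * coord k y) *: mul (e k) (e k).
Proof.
rewrite {1}(expand x) mul_suml; apply: eq_bigr => k _.
by rewrite mZl mul_e_r scalerA.
Qed.

Lemma mulC x y : mul x y = mul y x.
Proof.
rewrite mul_formula [in RHS](expand x) mul_sumr; apply: eq_bigr => k _.
by rewrite mZr (mul_e_l k y) scalerA.
Qed.

Definition w (j i : J) : K := coord i (mul (e j) (e j)).
Definition good (i : J) : Prop := w i i != 0 /\ forall j, j != i -> w j i = 0.

Lemma coord_mul_good i x y : good i ->
  coord i (mul x y) = coord i x * coord i y * w i i.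
Proof.
case=> _ hg; rewrite mul_formula coord_sum.
rewrite (eq_bigr (fun k => if k == i then coord i x * coord i y * w i i else 0)); last first.
  move=> k _; rewrite coordZ; case: eqP => [-> //|/eqP hk].
  by rewrite /w in hg; rewrite hg ?mulr0.
rewrite -big_mkcond big_pred1_seq ?supp_uniq //.
by case: ifP => // /negbT /coord_supp ->; rewrite !mul0r.
Qed.

Lemma coord_ee (i : J) : coord i (e i) = 1.
Proof. by rewrite coord_e eqxx. Qed.
Lemma coord_ne (i j : J) : i != j -> coord j (e i) = 0.
Proof. by move=> h; rewrite coord_e (negbTE h). Qed.

Lemma lemmaB i : good i -> maximal_modular_ideal mul (fun a => coord i a = 0).
Proof.
move=> hg; have hw := hg.1.
have Hid : is_ideal mul (fun a => coord i a = 0).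
  split; first exact: coord0.
  split; first by move=> a b ha hb; rewrite coordD ha hb addr0.
  split; first by move=> k a ha; rewrite coordZ ha mulr0.
  by move=> a x ha; rewrite !coord_mul_good // ha ?mulr0 ?mul0r.
split; first split; first exact: Hid.
  split; first by exists (e i); rewrite coord_ee => /eqP; rewrite oner_eq0.
  move=> N [N0 [Nadd [Nsc Nmul]]] hMN.
  case: (classic (exists b, N b /\ coord i b != 0)) => [[b [hb hbi]]|hn].
    right=> a.
    have h1 : N (a - (coord i a / coord i b) *: b).
      by apply: hMN; rewrite coordB coordZ; field.
    have h2 : N ((coord i a / coord i b) *: b) by apply: Nsc.
    by have := Nadd _ _ h1 h2; rewrite subrK.
  left=> a; split; last exact: hMN.
  move=> ha; case: (eqVneq (coord i a) 0) => // hne.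
  by exfalso; apply: hn; exists a.
exists ((w i i)^-1 *: e i) => a.
by rewrite coordB coord_mul_good // coordZ coord_ee; field.
Qed.

Lemma lemmaA M : maximal_modular_ideal mul M ->
  exists i, good i /\ forall a, M a <-> coord i a = 0.
Proof.
move=> [[[M0 [Madd [Msc Mmul]]] [[a0 ha0] Hmax]] [u Hu]].
have Msub : forall a b, M a -> M b -> M (a - b).
  by move=> a b ha hb; apply: Madd => //; rewrite -scaleN1r; apply: Msc.
have Msum : forall (s : seq J) (P : pred J) (F : J -> A),
    (forall j, P j -> M (F j)) -> M (\sum_(j <- s | P j) F j).
  by move=> s P F hF; apply: big_ind => //.
have Mall : (forall j, M (e j)) -> forall a, M a.
  move=> h a; rewrite (expand a); apply: Msum => j _; exact: Msc.
have [i hi] : exists i : J, ~ M (e i).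
  apply: NNPP => hn; apply: ha0; apply: Mall => j; apply: NNPP => hj.
  by apply: hn; exists j.
have hui : M (e i - coord i u *: mul (e i) (e i)) by have := Hu (e i); rewrite mul_e_r.
have uinz : coord i u != 0.
  by apply/eqP => h0; apply: hi; move: hui; rewrite h0 scale0r subr0.
have Mother : forall j : J, j != i -> M (e j).
  move=> j hji; apply: NNPP => hj.
  pose N := fun a => exists t, M (a - t *: e i).
  have hN : is_ideal mul N.
    split; first by exists 0; rewrite scale0r subr0.
    split.
      move=> a b [t ha] [t' hb]; exists (t + t').
      have -> : a + b - (t + t') *: e i = (a - t *: e i) + (b - t' *: e i).
        by rewrite scalerDl opprD addrACA.
      exact: Madd.
    split.
      by move=> k a [t ha]; exists (k * t); rewrite -scalerA -scalerBr; apply: Msc.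
    move=> a x [t ha].
    have hxa : N (mul x a).
      exists (t * coord i x / coord i u).
      have -> : mul x a - (t * coord i x / coord i u) *: e i =
         mul x (a - t *: e i) - (t * coord i x / coord i u) *:
            (e i - coord i u *: mul (e i) (e i)).
        rewrite mDr mNr mZr (mul_e_l i x).
rewrite scalerBr !scalerA divfK //.
by rewrite opprB addrA subrK.
      apply: Msub; first exact: (Mmul _ _ ha).1.
      exact: Msc.
    by split => //; rewrite mulC.
  have hMN : forall a, M a -> N a by move=> a ha; exists 0; rewrite scale0r subr0.
  case: (Hmax N hN hMN) => [hE|hA].
    by apply: hi; apply: (hE (e i)).1; exists 1; rewrite scale1r subrr.
  have [t ht] := hA (e j).
  have h1 := (Mmul _ (e j) ht).2.
  rewrite (mul_e_l j) coordB coordZ coord_ee coord_ne 1?eq_sym // in h1.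
  rewrite mulr0 subr0 scale1r in h1.
  have huj := Hu (e j); rewrite mul_e_r in huj.
  apply: hj.
  have -> : e j = (e j - coord j u *: mul (e j) (e j)) + coord j u *: mul (e j) (e j).
    by rewrite subrK.
  by apply: Madd => //; apply: Msc.
have MiM : forall b, coord i b = 0 -> M b.
  move=> b hb; rewrite (expand b); apply: Msum => j _.
  case: (eqVneq j i) => [->|hji]; first by rewrite hb scale0r.
  by apply: Msc; exact: Mother.
have HM : forall a, M a <-> coord i a = 0.
  move=> a; split=> ha; last exact: MiM.
  case: (eqVneq (coord i a) 0) => // hne; exfalso; apply: hi.
  have hb : M (a - coord i a *: e i).
    by apply: MiM; rewrite coordB coordZ coord_ee mulr1 subrr.
  have hc : M (coord i a *: e i).
    by have := Msub _ _ ha hb; rewrite opprB addrC subrK.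
  have := Msc (coord i a)^-1 _ hc; by rewrite scalerA mulVf // scale1r.
exists i; split => //; split.
  apply/eqP => h; move: ((HM _).1 hui).
  rewrite coordB coordZ coord_ee /w in h *; rewrite h mulr0 subr0 => /eqP.
  by rewrite oner_eq0.
move=> j hj; rewrite /w; apply/(HM _).
exact: (Mmul _ (e j) (Mother j hj)).2.
Qed.

Lemma Rad_iff a : Rad mul a <-> forall i, good i -> coord i a = 0.
Proof.
split.
  by move=> hR i hg; exact: hR _ (lemmaB hg).
move=> h M hM; have [i [hg hMi]] := lemmaA hM; apply/hMi; exact: h.
Qed.

Lemma all_good_semisimple : (forall i, good i) -> semisimple mul.
Proof.
move=> allg a hR; apply: coord_zero => i; exact: ((Rad_iff a).1 hR i (allg i)).
Qed.

Lemma semisimple_all_good : semisimple mul -> forall i, good i.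
Proof.
move=> hss i; apply: NNPP => hi.
have hR : Rad mul (e i).
  apply/Rad_iff => j hj; apply: coord_ne; apply/eqP => hij; apply: hi.
  by rewrite hij.
have := coord_ee i; rewrite (hss _ hR) coord0 => /eqP; by rewrite eq_sym oner_eq0.
Qed.

Lemma all_good_trivial : (forall i, good i) -> (exists a : A, a <> 0) ->
  nonzero_trivial_evolution mul.
Proof.
move=> allg [a ha]; split; first by exists a.
exists J, (e : J -> A), (fun i : J => w i i); split; first exact: Hb.
move=> i; split; first by apply/eqP; exact: (allg i).1.
apply: coord_zero => j; rewrite coordB coordZ coord_e.
case: (eqVneq i j) => [<-|hij]; rewrite /w; first by rewrite mulr1 subrr.
by have := (allg j).2 i hij; rewrite /w => ->; rewrite /= mulr0n mulr0 subrr.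
Qed.

Lemma trivial_all_good (w1 : I0 -> K) :
  (forall i, w1 i <> 0 /\ zero_set (mul (e i) (e i) - w1 i *: e i)) ->
  forall i, good i.
Proof.
move=> Hw1.
have hii : forall i : J, mul (e i) (e i) = w1 i *: e i.
  by move=> i; apply: subr0_eq; exact: (Hw1 i).2.
move=> i; split.
  by rewrite /w hii coordZ coord_ee mulr1; apply/eqP; exact: (Hw1 i).1.
by move=> j hj; rewrite /w hii coordZ coord_ne ?mulr0.
Qed.

Lemma part2 : (forall a, Rad mul a) \/ nonzero_trivial_evolution_mod mul (Rad mul).
Proof.
case: (classic (exists i : J, good i)) => [[i0 hi0]|hn]; last first.
  by left=> a; apply/Rad_iff => i hi; exfalso; apply: hn; exists i.
right; split.
  exists (e i0); move/Rad_iff => h; have := h i0 hi0.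
  by rewrite coord_ee => /eqP; rewrite oner_eq0.
pose I' := {i : J | pb (good i)}.
have gI : forall i : I', good (val i) by move=> i; exact: (elimT (pbP _) (valP i)).
pose x0 : I' := exist _ i0 (introT (pbP _) hi0).
exists I', (fun i => e (val i)), (fun i => w (val i) (val i)).
split; last first.
  move=> i; split; first by apply/eqP; exact: (gI i).1.
  apply/Rad_iff => j hj; rewrite coordB coordZ coord_e.
  case: (eqVneq (val i) j) => [<-|hij]; rewrite /w; first by rewrite mulr1 subrr.
  by have := hj.2 _ hij; rewrite /w => ->; rewrite /= mulr0n mulr0 subrr.
split; last first.
  move=> i j hij.
  have hne : val i != val j by apply/eqP => h; apply: hij; exact: val_inj.
  rewrite (mul_ee hne); apply/Rad_iff => k _; exact: coord0.
split.
  move=> a; pose s' : seq I' := pmap insub (supp a).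
  have hs' : map val s' = [seq x <- supp a | pb (good x)].
    rewrite pmap_filter; last exact: insubK.
    by apply: eq_filter => x; rewrite isSome_insub.
  exists (size s'), (fun k => nth x0 s' k), (fun k => coord (val (nth x0 s' k)) a).
  apply/Rad_iff => i hi.
  rewrite -(big_mkord xpredT (fun k => coord (val (nth x0 s' k)) a *: e (val (nth x0 s' k)))).
  rewrite -(big_nth x0 xpredT (fun j : I' => coord (val j) a *: e (val j))).
  rewrite -(big_map val xpredT (fun j => coord j a *: e j)) hs' big_filter.
  rewrite coordB coord_comb ?supp_uniq //.
  case: ifP => [_|]; first by rewrite subrr.
  case: (boolP (i \in supp a)) => [_ /= hpb|/coord_supp -> //]; last by rewrite subr0.
  by exfalso; move/negbT: hpb => /negP; apply; apply/pbP.
move=> n f c finj hR k.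
have := (Rad_iff _).1 hR (val (f k)) (gI (f k)).
rewrite coord_sum (bigD1 k) //= big1.
  by rewrite coordZ coord_ee mulr1 addr0.
move=> k' hk'; rewrite coordZ coord_ne ?mulr0 //.
apply: contra hk' => /eqP h; apply/eqP; apply: finj; exact: val_inj.
Qed.

End Coords.

Theorem corollary3p14 (K : numFieldType) (A : lmodType K) (mul : A -> A -> A)
  (Hbil : bilinear_prod mul) (Hevo : evolution_algebra mul)
  (Hnz : exists a : A, a <> 0) :
  (semisimple mul <-> nonzero_trivial_evolution mul) /\
  ((forall a : A, Rad mul a) \/ nonzero_trivial_evolution_mod mul (Rad mul)).
Proof.
case: Hevo => I0 [e Hb].
split; last exact: (part2 Hbil Hb).
split.
  move=> hss; exact: (all_good_trivial (semisimple_all_good Hbil Hb hss) Hnz).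
case=> _ [I1 [e1 [w1 [Hb1 Hw1]]]].
apply: (all_good_semisimple (Hb := Hb1) Hbil).
exact: (trivial_all_good Hb1 Hw1).
Qed.
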